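(* Let $\mathcal U=(V,\tilde V,W,\tilde W,R)$ be an ordered gradient space and $V_0=\{u\in V: u\le v\text{ for some }v\in V_+\}$. Then $V_0$ is a lattice (with the order $\le$) if and only if $V_+$ is a lattice. In this case, for all $u_1,u_2\in V_+$, the $V_+$-least upper bound $\max(u_1,u_2)$ satisfies $\max(u_1,u_2)\le v$ for every $v\in V$ with $v\ge u_1$ and $v\ge u_2$, and the $V_+$-greatest lower bound $\min(u_1,u_2)$ satisfies $\min(u_1,u_2)\ge v$ for every $v\in V$ with $v\le u_1$ and $v\le u_2$.
   Context: A gradient space $\mathcal U=(V,\tilde V,W,\tilde W,R)$ consists of vector spaces $\tilde V,\tilde W$ over $\mathbf R$ or $\mathbf C$, a relation $R\subseteq\tilde V\times\tilde W$ closed under addition and under multiplication by positive scalars, and linear subspaces $V\subseteq\tilde V$, $W\subseteq\tilde W$ such that $V$ is a reflexive Banach space (norm $\|\cdot\|_V$), $W$ is a reflexive strictly convex Banach space, for every $(u,g)\in R\cap(V\times W)$ there is $g'\in W$ with $(-u,g')\in R$, and $R\cap(V\times W)$ is closed in $V\times W$. A linear preorder on $\tilde V$ is a relation $\le$ with: $a\le a$; $a\le b,\ b\le c\Rightarrow a\le c$; $b\le c\Rightarrow a+b\le a+c$; $a\le b,\ \alpha\in[0,\infty)\Rightarrow\alpha a\le\alpha b$. A preordered gradient space is a gradient space with a linear preorder $\le$ on $\tilde V$ such that if $u_i\in V$, $\psi\in\tilde V$, $u_i\le\psi$ for all $i$ and $u_i\to u$ in $V$, then $u\le\psi$. An ordered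 gradient space is a preordered gradient space such that $V$ is strictly convex and, for $u,v\in V$, $0\le u\le v$ implies $\|u\|_V\le\|v\|_V$ (then $\le$ is a partial order on $V$). Let $V_+=\{v\in V:v\ge0\}$. For $u_1,u_2\in V_+$: $\max(u_1,u_2)$ is the unique element $u$ of $\{u\in V:u\ge u_1,\ u\ge u_2\}$ of least $V$-norm; $\min(u_1,u_2)$ is the unique element of $\{v\in V:0\le v\le u_1,\ v\le u_2\}$ minimizing $\|\max(u_1,u_2)-v\|_V$. A subset $A\subseteq V$ is a lattice if every pair of elements of $A$ has a least upper bound and a greatest lower bound within $A$ (with respect to $\le$); $V_+$-least upper bounds and $V_+$-greatest lower bounds mean least upper / greatest lower bounds taken within $V_+$. *)

(* Defs.v *)
From Stdlib Require Import Reals.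
Open Scope R_scope.

Record RVS := {
  vs_car :> Type;
  vs_zero : vs_car;
  vs_add : vs_car -> vs_car -> vs_car;
  vs_opp : vs_car -> vs_car;
  vs_scal : R -> vs_car -> vs_car;
  vs_addA : forall x y z, vs_add x (vs_add y z) = vs_add (vs_add x y) z;
  vs_addC : forall x y, vs_add x y = vs_add y x;
  vs_add0 : forall x, vs_add x vs_zero = x;
  vs_addN : forall x, vs_add x (vs_opp x) = vs_zero;
  vs_scal1 : forall x, vs_scal 1 x = x;
  vs_scalA : forall a b x, vs_scal a (vs_scal b x) = vs_scal (a * b) x;
  vs_scalDr : forall a x y, vs_scal a (vs_add x y) = vs_add (vs_scal a x) (vs_scal a y);
  vs_scalDl : forall a b x, vs_scal (a + b) x = vs_add (vs_scal a x) (vs_scal b x)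
}.

Arguments vs_zero {_}.
Arguments vs_add {_}.
Arguments vs_opp {_}.
Arguments vs_scal {_}.

Definition vs_sub {X : RVS} (x y : X) : X := vs_add x (vs_opp y).

Record NormedSubspace (X : RVS) := {
  ns_mem : X -> Prop;
  ns_norm : X -> R;
  ns_mem0 : ns_mem vs_zero;
  ns_memD : forall x y, ns_mem x -> ns_mem y -> ns_mem (vs_add x y);
  ns_memZ : forall a x, ns_mem x -> ns_mem (vs_scal a x);
  ns_norm_ge0 : forall x, ns_mem x -> 0 <= ns_norm x;
  ns_norm_eq0 : forall x, ns_mem x -> ns_norm x = 0 -> x = vs_zero;
  ns_normZ : forall a x, ns_mem x -> ns_norm (vs_scal a x) = Rabs a * ns_norm x;
  ns_normD : forall x y, ns_mem x -> ns_mem y ->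
     ns_norm (vs_add x y) <= ns_norm x + ns_norm y
}.

Arguments ns_mem {_}.
Arguments ns_norm {_}.

Definition ns_converges {X : RVS} (V : NormedSubspace X) (x : nat -> X) (l : X) : Prop :=
  ns_mem V l /\ (forall n, ns_mem V (x n)) /\
  forall eps, eps > 0 -> exists N, forall n, (n >= N)%nat -> ns_norm V (vs_sub (x n) l) < eps.

Definition ns_cauchy {X : RVS} (V : NormedSubspace X) (x : nat -> X) : Prop :=
  (forall n, ns_mem V (x n)) /\
  forall eps, eps > 0 -> exists N, forall n m, (n >= N)%nat -> (m >= N)%nat ->
     ns_norm V (vs_sub (x n) (x m)) < eps.

Definition ns_complete {X : RVS} (V : NormedSubspace X) : Prop :=
  forall x, ns_cauchy V x -> exists l, ns_converges V x l.

(** Bounded linear functionals on V (values off V are irrelevant). *)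
Definition ns_linear_on {X : RVS} (V : NormedSubspace X) (f : X -> R) : Prop :=
  (forall x y, ns_mem V x -> ns_mem V y -> f (vs_add x y) = f x + f y) /\
  (forall a x, ns_mem V x -> f (vs_scal a x) = a * f x).

Definition ns_fbound {X : RVS} (V : NormedSubspace X) (f : X -> R) (M : R) : Prop :=
  forall x, ns_mem V x -> Rabs (f x) <= M * ns_norm V x.

Definition ns_dual {X : RVS} (V : NormedSubspace X) (f : X -> R) : Prop :=
  ns_linear_on V f /\ exists M, ns_fbound V f M.

Definition ns_bidual {X : RVS} (V : NormedSubspace X) (Phi : (X -> R) -> R) : Prop :=
  (forall f g, ns_dual V f -> ns_dual V g -> Phi (fun x => f x + g x) = Phi f + Phi g) /\
  (forall a f, ns_dual V f -> Phi (fun x => a * f x) = a * Phi f) /\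
  (exists C, forall f M, ns_dual V f -> ns_fbound V f M -> Rabs (Phi f) <= C * M).

Definition ns_reflexive {X : RVS} (V : NormedSubspace X) : Prop :=
  forall Phi, ns_bidual V Phi ->
    exists v, ns_mem V v /\ forall f, ns_dual V f -> Phi f = f v.

Definition ns_banach {X : RVS} (V : NormedSubspace X) : Prop := ns_complete V.

Definition ns_strictly_convex {X : RVS} (V : NormedSubspace X) : Prop :=
  forall x y, ns_mem V x -> ns_mem V y -> ns_norm V x = 1 -> ns_norm V y = 1 ->
    x <> y -> ns_norm V (vs_scal (1/2) (vs_add x y)) < 1.

Record GradientSpace := {
  gs_Vt : RVS;
  gs_Wt : RVS;
  gs_V : NormedSubspace gs_Vt;
  gs_W : NormedSubspace gs_Wt;
  gs_R : gs_Vt -> gs_Wt -> Prop;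
  gs_R_add : forall u g u' g', gs_R u g -> gs_R u' g' -> gs_R (vs_add u u') (vs_add g g');
  gs_R_scal : forall a u g, a > 0 -> gs_R u g -> gs_R (vs_scal a u) (vs_scal a g);
  gs_V_banach : ns_banach gs_V;
  gs_V_reflexive : ns_reflexive gs_V;
  gs_W_banach : ns_banach gs_W;
  gs_W_reflexive : ns_reflexive gs_W;
  gs_W_strictly_convex : ns_strictly_convex gs_W;
  gs_R_neg : forall u g, ns_mem gs_V u -> ns_mem gs_W g -> gs_R u g ->
      exists g', ns_mem gs_W g' /\ gs_R (vs_opp u) g';
  gs_R_closed : forall (u : nat -> gs_Vt) (g : nat -> gs_Wt) u0 g0,
      (forall n, gs_R (u n) (g n)) -> ns_converges gs_V u u0 -> ns_converges gs_W g g0 ->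
      gs_R u0 g0
}.

Definition linear_preorder (X : RVS) (le : X -> X -> Prop) : Prop :=
  (forall a, le a a) /\
  (forall a b c, le a b -> le b c -> le a c) /\
  (forall a b c, le b c -> le (vs_add a b) (vs_add a c)) /\
  (forall a b (al : R), le a b -> 0 <= al -> le (vs_scal al a) (vs_scal al b)).

Definition preordered_gradient_space (U : GradientSpace) (le : gs_Vt U -> gs_Vt U -> Prop) : Prop :=
  linear_preorder (gs_Vt U) le /\
  forall (u : nat -> gs_Vt U) (psi u0 : gs_Vt U),
    (forall i, le (u i) psi) -> ns_converges (gs_V U) u u0 -> le u0 psi.

Definition ordered_gradient_space (U : GradientSpace) (le : gs_Vt U -> gs_Vt U -> Prop) : Prop :=
  preordered_gradient_space U le /\
  ns_strictly_convex (gs_V U) /\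
  forall u v, ns_mem (gs_V U) u -> ns_mem (gs_V U) v ->
    le vs_zero u -> le u v -> ns_norm (gs_V U) u <= ns_norm (gs_V U) v.

Definition Vplus (U : GradientSpace) (le : gs_Vt U -> gs_Vt U -> Prop) (v : gs_Vt U) : Prop :=
  ns_mem (gs_V U) v /\ le vs_zero v.

Definition Vzero (U : GradientSpace) (le : gs_Vt U -> gs_Vt U -> Prop) (u : gs_Vt U) : Prop :=
  ns_mem (gs_V U) u /\ exists v, Vplus U le v /\ le u v.

Definition is_lub_in {X : Type} (le : X -> X -> Prop) (A : X -> Prop) (a b c : X) : Prop :=
  A c /\ le a c /\ le b c /\ forall d, A d -> le a d -> le b d -> le c d.

Definition is_glb_in {X : Type} (le : X -> X -> Prop) (A : X -> Prop) (a b c : X) : Prop :=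
  A c /\ le c a /\ le c b /\ forall d, A d -> le d a -> le d b -> le d c.

Definition is_lattice {X : Type} (le : X -> X -> Prop) (A : X -> Prop) : Prop :=
  forall a b, A a -> A b ->
    (exists c, is_lub_in le A a b c) /\ (exists c, is_glb_in le A a b c).

(* Main.v *)
Require Import Defs.
From Stdlib Require Import Reals.
Open Scope R_scope.

Section Alg.
Variable X : RVS.
Implicit Types x y z : X.

Lemma add0l x : vs_add vs_zero x = x.
Proof. rewrite vs_addC. apply vs_add0. Qed.

Lemma addNK x y : vs_add (vs_add x y) (vs_opp y) = x.
Proof. rewrite <- vs_addA, vs_addN. apply vs_add0. Qed.

Lemma subK x y : vs_add (vs_add x (vs_opp y)) y = x.
Proof. rewrite <- vs_addA, (vs_addC _ (vs_opp y)), vs_addN. apply vs_add0. Qed.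

Lemma addsubK x y : vs_add y (vs_add x (vs_opp y)) = x.
Proof. rewrite vs_addC. apply subK. Qed.

Lemma addIl x y z : vs_add x y = vs_add x z -> y = z.
Proof. intro H.
 assert (E: vs_add (vs_add y x) (vs_opp x) = vs_add (vs_add z x) (vs_opp x))
   by (rewrite (vs_addC _ y), (vs_addC _ z), H; reflexivity).
 rewrite !addNK in E. exact E. Qed.

Lemma scal0 x : vs_scal 0 x = vs_zero.
Proof. apply (addIl (vs_scal 0 x)). rewrite <- vs_scalDl, Rplus_0_r, vs_add0. reflexivity. Qed.

Lemma scalN1 x : vs_scal (-1) x = vs_opp x.
Proof. apply (addIl x). rewrite vs_addN. rewrite <- (vs_scal1 _ x) at 1.
  rewrite <- vs_scalDl. replace (1 + -1) with 0 by ring. apply scal0. Qed.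

Lemma memN (V : NormedSubspace X) x : ns_mem V x -> ns_mem V (vs_opp x).
Proof. intro H. rewrite <- scalN1. apply ns_memZ. exact H. Qed.

Lemma memB (V : NormedSubspace X) x y : ns_mem V x -> ns_mem V y -> ns_mem V (vs_add x (vs_opp y)).
Proof. intros. apply ns_memD; auto. apply memN; auto. Qed.

Variable le : X -> X -> Prop.
Hypothesis Hp : linear_preorder X le.

Lemma le_refl x : le x x.
Proof. destruct Hp as [H _]. apply H. Qed.
Lemma le_trans x y z : le x y -> le y z -> le x z.
Proof. destruct Hp as [_ [H _]]. apply H. Qed.
Lemma le_addr a b c : le b c -> le (vs_add b a) (vs_add c a).
Proof. destruct Hp as [_ [_ [H _]]]. intro. rewrite (vs_addC _ b), (vs_addC _ c). apply H; auto. Qed.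
Lemma le_sub0 a b : le a b -> le vs_zero (vs_add b (vs_opp a)).
Proof. intro H. rewrite <- (vs_addN _ a). apply le_addr. auto. Qed.
Lemma le_add_pos x t : le vs_zero t -> le x (vs_add x t).
Proof. destruct Hp as [_ [_ [H _]]]. intro. rewrite <- (vs_add0 _ x) at 1. apply H; auto. Qed.
Lemma le_sub_pos x t : le vs_zero t -> le (vs_add x (vs_opp t)) x.
Proof. intro H. rewrite <- (subK x t) at 2. apply le_add_pos. auto. Qed.
End Alg.

Theorem mainTheorem18 (U : GradientSpace) (le : gs_Vt U -> gs_Vt U -> Prop)
  (Hord : ordered_gradient_space U le) :
  (is_lattice le (Vzero U le) <-> is_lattice le (Vplus U le)) /\
  (is_lattice le (Vplus U le) ->
   forall u1 u2, Vplus U le u1 -> Vplus U le u2 ->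
     (forall m, is_lub_in le (Vplus U le) u1 u2 m ->
        forall v, ns_mem (gs_V U) v -> le u1 v -> le u2 v -> le m v) /\
     (forall m, is_glb_in le (Vplus U le) u1 u2 m ->
        forall v, ns_mem (gs_V U) v -> le v u1 -> le v u2 -> le v m)).
Proof.
  destruct Hord as [[Hp _] _].
  set (M := ns_mem (gs_V U)).
  pose proof (le_trans _ _ Hp) as LT. pose proof (le_addr _ _ Hp) as LA.
  pose proof (le_sub0 _ _ Hp) as LS0. pose proof (le_add_pos _ _ Hp) as LAP.
  pose proof (le_sub_pos _ _ Hp) as LSP. pose proof (le_refl _ _ Hp) as LR.
  assert (glb_below : is_lattice le (Vplus U le) -> forall x y m, Vplus U le x -> Vplus U le y ->
     is_glb_in le (Vplus U le) x y m -> forall w, M w -> le w x -> le w y -> le w m).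
  { intros HL x y m [Mx Px] [My Py] [_ [_ [_ Hm]]] w Mw Hwx Hwy.
    set (s := vs_add x (vs_opp w)).
    assert (Ms : M s) by (apply memB; auto).
    assert (Ps : le vs_zero s) by (apply LS0; auto).
    assert (Vxs : Vplus U le (vs_add x s)).
    { split. apply ns_memD; auto. apply (LT _ x); auto. }
    assert (Vys : Vplus U le (vs_add y s)).
    { split. apply ns_memD; auto. apply (LT _ y); auto. }
    destruct (HL _ _ Vxs Vys) as [_ [g [[Mg Pg] [Hgx [Hgy Hg]]]]].
    assert (Hsg : le s g).
    { apply Hg. split; auto.
      rewrite <- (add0l _ s) at 1. apply LA; auto.
      rewrite <- (add0l _ s) at 1. apply LA; auto. }
    assert (Hgm : le (vs_add g (vs_opp s)) m).
    { apply Hm. split. apply memB; auto. apply LS0; auto.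
      rewrite <- (addNK _ x s). apply LA; auto.
      rewrite <- (addNK _ y s). apply LA; auto. }
    assert (Hws : vs_add w s = x) by apply addsubK.
    assert (Hwg : le (vs_add w s) g).
    { apply Hg. rewrite Hws. split; auto.
      apply LA; auto. apply LA; auto. }
    eapply LT; [| exact Hgm].
    rewrite <- (addNK _ w s). apply LA; auto. }
  split; [split|].
  -
    intros HL a b [Ma Pa] [Mb Pb].
    assert (Z0 : Vzero U le vs_zero).
    { split. apply ns_mem0. exists vs_zero. split. split. apply ns_mem0. apply LR; auto.
      apply LR; auto. }
    assert (Za : Vzero U le a) by (split; auto; exists a; split; [split; auto| apply LR; auto]).
    assert (Zb : Vzero U le b) by (split; auto; exists b; split; [split; auto| apply LR; auto]).
    destruct (HL _ _ Za Zb) as [[L [[ML _] [HaL [HbL HL']]]] [G [ZG [HGa [HGb HG']]]]].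
    split.
    + exists L. split. split; auto. eapply LT; eauto.
      split; auto. split; auto.
      intros d [Md Pd] Had Hbd. apply HL'; auto.
      split; auto. exists d. split. split; auto. apply LR; auto.
    + destruct (HL _ _ ZG Z0) as [[H [[MH _] [HGH [H0H HH']]]] _].
      exists H. split. split; auto.
      split. apply HH'; auto.
      split. apply HH'; auto.
      intros d [Md Pd] Hda Hdb. eapply LT; [|exact HGH]. apply HG'; auto.
      split; auto. exists d. split. split; auto. apply LR; auto.
  -
    intros HL a b [Ma [p [[Mp Pp] Hap]]] [Mb [q [[Mq Pq] Hbq]]].
    set (t := vs_add (vs_add p (vs_opp a)) (vs_add q (vs_opp b))).
    assert (Mt : M t) by (apply ns_memD; apply memB; auto).
    assert (Pt1 : le vs_zero (vs_add p (vs_opp a))) by (apply LS0; auto).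
    assert (Pt2 : le vs_zero (vs_add q (vs_opp b))) by (apply LS0; auto).
    assert (Pt : le vs_zero t).
    { eapply LT. exact Pt1. apply LAP; auto. }
    assert (Vat : Vplus U le (vs_add a t)).
    { split. apply ns_memD; auto. unfold t. rewrite vs_addA, (vs_addC _ a), subK.
      eapply LT. exact Pp. apply LAP; auto. }
    assert (Vbt : Vplus U le (vs_add b t)).
    { split. apply ns_memD; auto. unfold t. rewrite (vs_addC _ (vs_add p _)), vs_addA, (vs_addC _ b), subK.
      eapply LT. exact Pq. apply LAP; auto. }
    destruct (HL _ _ Vat Vbt) as [[L [[ML PL] [HaL [HbL HL']]]] [G HGglb]].
    split.
    + exists (vs_add L (vs_opp t)). split.
      { split. apply memB; auto. exists L. split. split; auto. apply LSP; auto. }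
      split. rewrite <- (addNK _ a t). apply LA; auto.
      split. rewrite <- (addNK _ b t). apply LA; auto.
      intros d [Md _] Had Hbd.
      assert (HLd : le L (vs_add d t)).
      { apply HL'. split. apply ns_memD; auto. eapply LT. apply Vat. apply LA; auto.
        apply LA; auto. apply LA; auto. }
      rewrite <- (addNK _ d t). apply LA; auto.
    + pose proof HGglb as HG0. destruct HG0 as [[MG PG] [HGa [HGb HG']]].
      exists (vs_add G (vs_opp t)). split.
      { split. apply memB; auto. exists G. split. split; auto. apply LSP; auto. }
      split. rewrite <- (addNK _ a t). apply LA; auto.
      split. rewrite <- (addNK _ b t). apply LA; auto.
      intros d [Md _] Hda Hdb.
      assert (HdG : le (vs_add d t) G).
      { apply (glb_below HL (vs_add a t) (vs_add b t) G Vat Vbt HGglb). apply ns_memD; auto.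
        apply LA; auto. apply LA; auto. }
      rewrite <- (addNK _ d t). apply LA; auto.
  - intros HL u1 u2 V1 V2. split.
    + intros m [_ [_ [_ Hm]]] v Mv H1 H2. apply Hm; auto.
      split; auto. apply (LT _ u1); auto. apply V1.
    + intros m Hm v Mv H1 H2. exact (glb_below HL u1 u2 m V1 V2 Hm v Mv H1 H2).
Qed.
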